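(* Let $D$ denote the set of variable network games $(v,\rho)\in\mathbb V^N\times\mathbb P^N$ such that $v$ is component additive. Then: (i) the Expected Myerson Value $\Psi^m$ is an allocation rule on the class of variable network games which, on $D$, satisfies component balance and the equal bargaining power property; and (ii) if $\Psi\colon\mathbb V^N\times\mathbb P^N\to\mathbb R^N$ is any allocation rule on the class of variable network games satisfying component balance and the equal bargaining power property for all $(v,\rho)\in D$, then $\Psi(v,\rho)=\Psi^m(v,\rho)$ for all $(v,\rho)\in D$. That is, $\Psi^m$ is the unique allocation rule on the class of component additive variable network games that satisfies component balance and the equal bargaining power property.
   Context: $N=\{1,\dots,n\}$ is a finite player set. A link is an unordered pair $ij=\{i,j\}$ of distinct players; $g_N$ is the set of all links; a network is any $g\subseteq g_N$; $\mathbb G^N$ is the set of all networks and $g_0=\varnothing$. For $g\in\mathbb G^N$: $N_i(g)=\{j\ne i: ij\in g\}$, $N(g)=\bigcup_i N_i(g)$ (players with at least one link in $g$), and $N_0(g)=N\setminus N(g)$ (isolated players). For $S\subseteq N$, $g|S=\{ij\in g: i,j\in S\}$. $g+ij=g\cup\{ij\}$, $g-ij=g\setminus\{ij\}$. A component of $g$ is a nonempty subnetwork $h\subseteq g$ that is connected (any two players of $N(h)$ are joined by a path in $h$) and maximal (if $i\in N(h)$ and $ij\in g$ then $ij\in h$); $C(g)$ is the set of components of $g$. A network formation probability distribution is a map $\rho\colon\mathbb G^N\to[0,1]$ with $\sum_{g}\rho(g)=1$; $\mathbb P^N$ is the set of these. $\mathbb G(\rho)=\{g:\rho(g)>0\}$,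 and the extent is $g(\rho)=\bigcup_{g\in\mathbb G(\rho)}g$. For a network $g$, the restriction $\rho_g\in\mathbb P^N$ is $\rho_g(h)=\sum_{h'\subseteq g_N\setminus g}\rho(h\cup h')$ if $h\subseteq g$ and $\rho_g(h)=0$ otherwise. For a link $ij$, $\rho^{-ij}=\rho_{g_N-ij}$. A network game is $v\colon\mathbb G^N\to\mathbb R$ with $v(\varnothing)=0$; $\mathbb V^N$ is the set of these. $v$ is component additive if $v(g)=\sum_{h\in C(g)}v(h)$ for all $g$. A variable network game is a pair $(v,\rho)\in\mathbb V^N\times\mathbb P^N$. An allocation rule on the class of variable network games is a map $\Psi\colon\mathbb V^N\times\mathbb P^N\to\mathbb R^N$ with $\Psi_i(v,\rho)=0$ for every $i\in N_0(g(\rho))$. It is component balanced (on $(v,\rho)$ with $v$ component additive) if for every component $h\in C(g(\rho))$: $\sum_{i\in N(h)}\Psi_i(v,\rho)=\sum_{g\in\mathbb G(\rho)}\rho(g)\,v(g\cap h)$. It satisfies the equal bargaining power property if for every link $ij\in g(\rho)$: $\Psi_i(v,\rho)-\Psi_i(v,\rho^{-ij})=\Psi_j(v,\rho)-\Psi_j(v,\rho^{-ij})$. The Myerson Value for network games is $Y^m_i(v,g)=\sum_{S\subseteq N\setminus\{i\}}\frac{\#S!\,(n-\#S-1)!}{n!}\,[v(g|(S\cup\{i\}))-v(g|S)]$. The Expected Myerson Value is $\Psi^m(v,\rho)=\sum_{g\in\mathbb G^N}\rho(g)\,Y^m(v,g)$. *)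

(* Defs.v *)
From HB Require Import structures.
From mathcomp Require Import all_boot all_order all_algebra.
From mathcomp Require Import reals.
Set Implicit Arguments. Unset Strict Implicit. Unset Printing Implicit Defensive.
Import Order.TTheory GRing.Theory Num.Theory.
Local Open Scope ring_scope.

(* Players: N = 'I_n.  A link is an unordered pair of distinct players,
   i.e. a 2-element subset of 'I_n. *)
Definition link (n : nat) := {l : {set 'I_n} | #|l| == 2%N}.
Definition network (n : nat) := {set link n}.

Section Defs.
Variable n : nat.
Variable R : realType.

Definition Nplayers (g : network n) : {set 'I_n} := \bigcup_(l in g) val l.
Definition N0 (g : network n) : {set 'I_n} := ~: Nplayers g.

Definition restrS (g : network n) (S : {set 'I_n}) : network n :=
  [set l in g | val l \subset S].

Definition adj (h : network n) : rel 'I_n :=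
  fun i j => [exists l in h, (i \in val l) && (j \in val l)].

Definition is_component (g h : network n) : bool :=
  [&& h != set0, h \subset g,
      [forall i, forall j,
         (i \in Nplayers h) && (j \in Nplayers h) ==> connect (adj h) i j] &
      [forall i, forall l,
         [&& i \in Nplayers h, l \in g & i \in val l] ==> (l \in h)]].

Definition components (g : network n) : {set network n} :=
  [set h | is_component g h].

Definition is_game (v : network n -> R) : Prop := v set0 = 0.

Definition component_additive (v : network n -> R) : Prop :=
  forall g, v g = \sum_(h in components g) v h.

Definition is_prob (rho : network n -> R) : Prop :=
  (forall g, 0 <= rho g) /\ \sum_(g : network n) rho g = 1.

Definition extent (rho : network n -> R) : network n :=
  \bigcup_(g : network n | 0 < rho g) g.

Definition restr_prob (g : network n) (rho : network n -> R) : network n -> R :=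
  fun h => if h \subset g then
             \sum_(h' : network n | h' \subset ~: g) rho (h :|: h')
           else 0.

Definition minus_link (l : link n) (rho : network n -> R) : network n -> R :=
  restr_prob (~: [set l]) rho.

Definition inD (v rho : network n -> R) : Prop :=
  [/\ is_game v, component_additive v & is_prob rho].

Definition alloc_type := (network n -> R) -> (network n -> R) -> 'I_n -> R.

Definition is_allocation_rule (Psi : alloc_type) : Prop :=
  forall v rho, is_game v -> is_prob rho ->
    forall i, i \in N0 (extent rho) -> Psi v rho i = 0.

Definition component_balanced_on (Psi : alloc_type) (v rho : network n -> R)
  : Prop :=
  forall h, h \in components (extent rho) ->
    \sum_(i in Nplayers h) Psi v rho i =
    \sum_(g : network n | 0 < rho g) rho g * v (g :&: h).

Definition equal_bargaining_on (Psi : alloc_type) (v rho : network n -> R)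
  : Prop :=
  forall l, l \in extent rho -> forall i j, i \in val l -> j \in val l ->
    Psi v rho i - Psi v (minus_link l rho) i =
    Psi v rho j - Psi v (minus_link l rho) j.

Definition myerson (v : network n -> R) (g : network n) (i : 'I_n) : R :=
  \sum_(S : {set 'I_n} | i \notin S)
     ((#|S|`! * (n - #|S| - 1)`!)%:R / (n`!)%:R) *
     (v (restrS g (i |: S)) - v (restrS g S)).

Definition exp_myerson : alloc_type :=
  fun v rho i => \sum_(g : network n) rho g * myerson v g i.

End Defs.

(* Main.v *)
Require Import Defs.
From mathcomp Require Import all_boot all_order all_algebra.
From mathcomp Require Import reals.
From mathcomp Require Import zify lra.
Import Order.TTheory GRing.Theory Num.Theory.
Local Open Scope ring_scope.
Set Implicit Arguments. Unset Strict Implicit. Unset Printing Implicit Defensive.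

Lemma reindexU1 (R : realType) (T : finType) (x : T) (F : {set T} -> R) :
  \sum_(S : {set T} | x \notin S) F (x |: S) = \sum_(S : {set T} | x \in S) F S.
Proof.
rewrite [RHS](reindex_onto (fun S => x |: S) (fun S => S :\ x)); last first.
  by move=> S xS; rewrite setD1K.
apply: eq_bigl => S; rewrite setU11 /=.
case xS: (x \in S) => /=.
  apply/esym/negbTE; apply/eqP => E.
  have : x \in (x |: S) :\ x by rewrite E.
  by rewrite !inE eqxx.
by rewrite setU1K ?xS /= ?eqxx.
Qed.

Lemma sum_sub1 (R : realType) (T : finType) (a : T) (F : {set T} -> R) :
  \sum_(S : {set T} | S \subset [set a]) F S = F set0 + F [set a].
Proof.
rewrite (bigD1 set0) ?sub0set //= (bigD1 [set a]) ?subxx //=; last first.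
  by apply/set0Pn; exists a; rewrite inE.
rewrite big1 ?addr0 //.
by move=> S /andP[/andP[]]; rewrite subset1 => /orP[]/eqP->; rewrite eqxx // andbF.
Qed.

Definition coef (n : nat) (R : realType) (s : nat) : R :=
  ((s`! * (n - s - 1)`!)%:R / (n`!)%:R).

Definition Sh (n : nat) (R : realType) (f : {set 'I_n} -> R) (i : 'I_n) : R :=
  \sum_(S : {set 'I_n} | i \notin S) coef n R #|S| * (f (i |: S) - f S).

Lemma myersonE (n : nat) (R : realType) v g i :
  @myerson n R v g i = Sh (fun S => v (restrS g S)) i.
Proof. by []. Qed.

Lemma coef_id (n : nat) (R : realType) t : (t <= n)%N ->
  t%:R * coef n R t.-1 - (n - t)%:R * coef n R t = (t == n)%:R - (t == 0%N)%:R.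
Proof.
move=> tn; rewrite /coef.
have nf : (n`!)%:R != 0 :> R by rewrite pnatr_eq0 -lt0n fact_gt0.
case: t tn => [|t] tn.
  rewrite mul0r sub0r subn0 fact0 mul1n.
  case: n nf {tn} => [|n] nf; first by rewrite !mul0r oppr0 eqxx subrr.
  rewrite subn1 /= mulrA -natrM -factS divff //.
  by rewrite sub0r.
rewrite /=.
case: (ltngtP t.+1 n) tn => // [lt _|<- _]; last first.
  rewrite subnn mul0r subr0 subr0 subSnn subnn fact0 muln1 mulrA -natrM -factS divff //.
  by rewrite pnatr_eq0 -lt0n fact_gt0.
have [m ->] : exists m, n = (t + m.+2)%N.
  by exists (n - t.+2)%N; lia.
have -> : (t + m.+2 - t - 1 = m.+1)%N by lia.
have -> : (t + m.+2 - t.+1 = m.+1)%N by lia.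
rewrite subn1 !mulrA -!natrM.
have -> : (t.+1 * ((t.+1.-1)`! * (m.+1)`!) = (m.+1) * ((t.+1)`! * m`!))%N.
  rewrite /= [(m.+1)`!]factS [(t.+1)`!]factS; lia.
by rewrite subrr subr0.
Qed.

Lemma sum_pick1 (R : realType) (T : finType) (a : T) (F : T -> R) :
  \sum_(x : T) (x == a)%:R * F x = F a.
Proof.
rewrite (bigD1 a) //= eqxx mul1r big1 ?addr0 //.
by move=> x /negbTE ->; rewrite mul0r.
Qed.

Lemma Sh_shift (n : nat) (R : realType) (f : {set 'I_n} -> R) (i : 'I_n) :
  \sum_(S : {set 'I_n} | i \notin S) coef n R #|S| * f (i |: S) =
  \sum_(T : {set 'I_n} | i \in T) coef n R #|T|.-1 * f T.
Proof.
rewrite -(reindexU1 i (fun T : {set 'I_n} => coef n R #|T|.-1 * f T)).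
by apply: eq_bigr => S iS; rewrite cardsU1 iS.
Qed.

Lemma Sh_eff (n : nat) (R : realType) (f : {set 'I_n} -> R) :
  \sum_(i : 'I_n) Sh f i = f setT - f set0.
Proof.
have ShE : forall i, Sh f i = \sum_(T : {set 'I_n} | i \in T) coef n R #|T|.-1 * f T
   - \sum_(S : {set 'I_n} | i \notin S) coef n R #|S| * f S.
  move=> i; rewrite -Sh_shift -sumrB /Sh; apply: eq_bigr => S _; by rewrite mulrBr.
under eq_bigr do rewrite ShE.
rewrite sumrB.
have E1 : \sum_(i : 'I_n) \sum_(T : {set 'I_n} | i \in T) coef n R #|T|.-1 * f T =
   \sum_(T : {set 'I_n}) (#|T|%:R * coef n R #|T|.-1) * f T.
  under eq_bigr do rewrite big_mkcond /=.
  rewrite exchange_big /=; apply: eq_bigr => T _.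
  rewrite -big_mkcond /= sumr_const -mulrA mulr_natl.
  by congr (_ *+ _); apply: eq_card => x.
have E2 : \sum_(i : 'I_n) \sum_(S : {set 'I_n} | i \notin S) coef n R #|S| * f S =
   \sum_(T : {set 'I_n}) ((n - #|T|)%:R * coef n R #|T|) * f T.
  under eq_bigr do rewrite big_mkcond /=.
  rewrite exchange_big /=; apply: eq_bigr => T _.
  rewrite -big_mkcond /= sumr_const -mulrA mulr_natl.
  congr (_ *+ _).
  have HC := cardsC T; rewrite card_ord in HC.
  have -> : (n - #|T| = #|~: T|)%N by lia.
  by apply: eq_card => x; rewrite !inE.
rewrite E1 E2 -sumrB.
rewrite (eq_bigr (fun T => (T == setT)%:R * f T - (T == set0)%:R * f T)).
  by rewrite sumrB !sum_pick1.
move=> T _.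
have Tn : (#|T| <= n)%N by have := max_card (mem T); rewrite card_ord.
rewrite -mulrBl -mulrBl coef_id //.
congr ((_%:R - _%:R) * _); last by rewrite cards_eq0.
rewrite eqEcard subsetT cardsT card_ord /=.
by rewrite eqn_leq Tn.
Qed.

Definition closed_in (n : nat) (g h : network n) :=
  forall i l, i \in Nplayers h -> l \in g -> i \in val l -> l \in h.

Lemma NplayersP (n : nat) (h : network n) i :
  reflect (exists2 l, l \in h & i \in val l) (i \in Nplayers h).
Proof. exact: bigcupP. Qed.

Lemma NplayersS (n : nat) (c h : network n) i :
  c \subset h -> i \in Nplayers c -> i \in Nplayers h.
Proof.
move=> ch /NplayersP[l lc il]; apply/NplayersP; exists l => //.
exact: (subsetP ch).
Qed.

Lemma compE (n : nat) (g c : network n) :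
  (c \in components g) = is_component g c.
Proof. by rewrite inE. Qed.

Lemma comp_sub (n : nat) (g h c : network n) :
  h \subset g -> closed_in g h ->
  (c \in components h) = (c \in components g) && (c \subset h).
Proof.
move=> hg clh; rewrite !compE /is_component.
apply/idP/idP.
  move/and4P=> [ne ch conn cl].
  rewrite ch andbT; apply/and4P; split => //; first exact: subset_trans ch hg.
  apply/forallP => i; apply/forallP => l; apply/implyP => /and3P[iN lg il].
  have lh : l \in h by apply: (clh i) => //; exact: NplayersS iN.
  by have := implyP (forallP (forallP cl i) l); apply; rewrite iN lh il.
move=> /andP[/and4P[ne cg conn cl] ch].
apply/and4P; split => //.
apply/forallP => i; apply/forallP => l; apply/implyP => /and3P[iN lh il].
by have := implyP (forallP (forallP cl i) l); apply; rewrite iN (subsetP hg) ?il.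
Qed.

Lemma closed_compl (n : nat) (g h : network n) :
  closed_in g h -> closed_in g (g :\: h).
Proof.
move=> clh i l /NplayersP[m]; rewrite inE => /andP[mh mg] im lg il.
rewrite inE lg andbT; apply/negP => lh.
have : m \in h by apply: (clh i) => //; apply/NplayersP; exists l.
by rewrite (negbTE mh).
Qed.

Lemma adj_sym (n : nat) (h : network n) : symmetric (adj h).
Proof.
move=> x y; rewrite /adj; apply/existsP/existsP => [][l /andP[lh /andP[a b]]];
  by exists l; rewrite lh a b.
Qed.

Lemma link_ex (n : nat) (l : link n) : exists x, x \in val l.
Proof.
have := valP l; case: (set_0Vmem (val l)) => [->|[x xl]]; last by exists x.
by rewrite cards0.
Qed.

Lemma comp_dich (n : nat) (g h c : network n) l0 :
  c \in components g -> closed_in g h -> l0 \in c -> l0 \in h -> c \subset h.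
Proof.
rewrite compE => /and4P[ne cg conn cl] clh l0c l0h.
apply/subsetP => l lc.
have [x xl0] := link_ex l0; have [y yl] := link_ex l.
have xN : x \in Nplayers c by apply/NplayersP; exists l0.
have yN : y \in Nplayers c by apply/NplayersP; exists l.
have cxy : connect (adj c) x y.
  by have := implyP (forallP (forallP conn x) y); apply; rewrite xN yN.
have clos : closed (adj c) (Nplayers h).
  apply: intro_closed; first exact: sym_connect_sym (@adj_sym n c).
  move=> a b /existsP[m /andP[mc /andP[am bm]]] aN.
  apply/NplayersP; exists m => //.
  by apply: (clh a) => //; exact: (subsetP cg).
have yh : y \in Nplayers h.
  rewrite -(closed_connect clos cxy); apply/NplayersP; by exists l0.
by apply: (clh y) => //; exact: (subsetP cg).
Qed.

Lemma CA_split (n : nat) (R : realType) (v : network n -> R) (g h : network n) :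
  component_additive v -> h \subset g -> closed_in g h ->
  v g = v h + v (g :\: h).
Proof.
move=> CA hg clh.
rewrite (CA g) (CA h) (CA (g :\: h)) (bigID (fun c : network n => c \subset h)) /=.
congr (_ + _); apply: eq_bigl => c.
  by rewrite (comp_sub _ hg clh).
rewrite (comp_sub _ (subsetDl g h) (closed_compl clh)).
case cg: (c \in components g) => //=.
have := cg; rewrite compE => /and4P[ne cgs _ _].
apply/idP/idP; last first.
  move=> cs; case: (set_0Vmem c) => [c0|[l0 l0c]].
    by rewrite c0 eqxx in ne.
  apply/negP => ch; have := subsetP cs l0 l0c.
  by rewrite inE (subsetP ch l0 l0c).
move=> nch; apply/subsetP => l lc; rewrite inE (subsetP cgs l lc) andbT.
apply/negP => lh; by rewrite (comp_dich cg clh lc lh) in nch.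
Qed.


Lemma comp_exists (n : nat) (E : network n) i :
  i \in Nplayers E -> exists2 h, h \in components E & i \in Nplayers h.
Proof.
move=> /NplayersP[l0 l0E il0].
pose h : network n := [set l in E | [exists k, (k \in val l) && connect (adj E) i k]].
have key : forall x, connect (adj E) i x -> connect (adj h) i x.
  move=> x cx.
  have clos : closed (adj E) [pred y | connect (adj E) i y && connect (adj h) i y].
    apply: intro_closed; first exact: sym_connect_sym (@adj_sym n E).
    move=> a b /existsP[m /andP[mE /andP[am bm]]] /andP[cEa cha].
    have mh : m \in h by rewrite inE mE; apply/existsP; exists a; rewrite am cEa.
    apply/andP; split.
      by apply: (connect_trans cEa); apply: connect1; apply/existsP; exists m; rewrite mE am bm.
    by apply: (connect_trans cha); apply: connect1; apply/existsP; exists m; rewrite mh am bm.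
  have := closed_connect clos cx; rewrite !inE /= !connect0 /= => /esym/andP[].
  by [].
have Nh : forall j, j \in Nplayers h -> connect (adj E) i j.
  move=> j /NplayersP[l]; rewrite inE => /andP[lE /existsP[k /andP[kl ck]]] jl.
  by apply: (connect_trans ck); apply: connect1; apply/existsP; exists l; rewrite lE kl jl.
have l0h : l0 \in h by rewrite inE l0E; apply/existsP; exists i; rewrite il0 connect0.
exists h; last by apply/NplayersP; exists l0.
rewrite compE; apply/and4P; split.
- by apply/set0Pn; exists l0.
- by apply/subsetP => l; rewrite inE => /andP[].
- apply/forallP => j; apply/forallP => k; apply/implyP => /andP[jN kN].
  have symh := sym_connect_sym (@adj_sym n h).
  by apply: (connect_trans (y := i)); [rewrite symh|]; apply: key; apply: Nh.
- apply/forallP => j; apply/forallP => l; apply/implyP => /and3P[jN lE jl].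
  by rewrite inE lE; apply/existsP; exists j; rewrite jl Nh.
Qed.

Lemma restrS_U1 (n : nat) (g : network n) i S :
  (forall l, l \in g -> i \in val l -> False) -> restrS g (i |: S) = restrS g S.
Proof.
move=> H; apply/setP => l; rewrite !inE; case lg: (l \in g) => //=.
apply/subsetP/subsetP => sub x xl.
  have := sub x xl; rewrite !inE => /orP[/eqP ex|//].
  by case: (H l lg); rewrite -ex.
by rewrite inE sub ?orbT.
Qed.

Lemma restrS_I (n : nat) (g h : network n) X :
  restrS g X :&: h = restrS (g :&: h) X.
Proof. by apply/setP => l; rewrite !inE andbAC. Qed.

Lemma restrS_D (n : nat) (g h : network n) X :
  restrS g X :\: h = restrS (g :\: h) X.
Proof. by apply/setP => l; rewrite !inE andbA. Qed.

Lemma restrS_T (n : nat) (g : network n) : restrS g setT = g.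
Proof. by apply/setP => l; rewrite !inE subsetT andbT. Qed.

Lemma restrS_0 (n : nat) (g : network n) : restrS g set0 = set0.
Proof.
apply/setP => l; rewrite !inE; apply/negbTE; apply/negP => /andP[_].
have [x xl] := link_ex l.
by move/subsetP/(_ x xl); rewrite inE.
Qed.

Lemma Sh_ext (n : nat) (R : realType) (f f' : {set 'I_n} -> R) i :
  (forall X, f X = f' X) -> Sh f i = Sh f' i.
Proof. by move=> E; apply: eq_bigr => S _; rewrite !E. Qed.

Lemma Sh_add (n : nat) (R : realType) (f f' : {set 'I_n} -> R) i :
  Sh (fun X => f X + f' X) i = Sh f i + Sh f' i.
Proof.
rewrite /Sh -big_split /=; apply: eq_bigr => S _.
by rewrite -mulrDr; congr (_ * _); rewrite addrACA opprD.
Qed.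

Lemma Sh_null (n : nat) (R : realType) (f : {set 'I_n} -> R) i :
  (forall S, f (i |: S) = f S) -> Sh f i = 0.
Proof. by move=> E; apply: big1 => S _; rewrite E subrr mulr0. Qed.

Lemma myerson_null (n : nat) (R : realType) (v : network n -> R) g i :
  i \notin Nplayers g -> myerson v g i = 0.
Proof.
move=> iN; rewrite myersonE; apply: Sh_null => S; rewrite restrS_U1 //.
move=> l lg il; move/negP: iN; apply; apply/NplayersP; by exists l.
Qed.

Lemma comp_closed (n : nat) (E h : network n) :
  h \in components E -> closed_in E h.
Proof.
rewrite compE => /and4P[_ _ _ cl] i l iN lE il.
by have := implyP (forallP (forallP cl i) l); apply; rewrite iN lE il.
Qed.

Lemma comp_subset (n : nat) (E h : network n) :
  h \in components E -> h \subset E.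
Proof. by rewrite compE => /and4P[]. Qed.

Lemma myerson_CB (n : nat) (R : realType) (v : network n -> R) (g E h : network n) :
  is_game v -> component_additive v -> g \subset E -> h \in components E ->
  \sum_(i in Nplayers h) myerson v g i = v (g :&: h).
Proof.
move=> G0 CA gE hE.
have clE := comp_closed hE.
have split : forall X, v (restrS g X) = v (restrS (g :&: h) X) + v (restrS (g :\: h) X).
  move=> X; rewrite -restrS_I -restrS_D.
  have hs : restrS g X :&: h \subset restrS g X by apply: subsetIl.
  have cl : closed_in (restrS g X) (restrS g X :&: h).
    move=> i l iN lg il; rewrite inE lg /=.
    apply: (clE i) => //; first exact: NplayersS (subsetIr _ _) iN.
    by apply: (subsetP gE); move: lg; rewrite inE => /andP[].
  rewrite (CA_split CA hs cl); congr (_ + v _).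
  apply/setP => l; rewrite !inE; by case: (l \in h); case: (l \in g); case: (val l \subset X).
have myE : forall i, myerson v g i =
   Sh (fun X => v (restrS (g :&: h) X)) i + Sh (fun X => v (restrS (g :\: h) X)) i.
  by move=> i; rewrite myersonE -Sh_add; apply: Sh_ext.
transitivity (\sum_(i in Nplayers h) Sh (fun X => v (restrS (g :&: h) X)) i).
  apply: eq_bigr => i iN; rewrite myE (@Sh_null _ _ (fun X => v (restrS (g :\: h) X))) ?addr0 //.
  move=> S; rewrite restrS_U1 // => l; rewrite inE => /andP[lh lg] il.
  have : l \in h by apply: (clE i) => //; exact: (subsetP gE).
  by rewrite (negbTE lh).
transitivity (\sum_(i : 'I_n) Sh (fun X => v (restrS (g :&: h) X)) i).
  rewrite big_mkcond /=; apply: eq_bigr => i _.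
  case iN: (i \in Nplayers h) => //; apply/esym/Sh_null => S.
  rewrite restrS_U1 // => l; rewrite inE => /andP[lh lg] il.
  by move/negP: iN; apply; apply/NplayersP; exists l.
by rewrite Sh_eff restrS_T restrS_0 G0 subr0.
Qed.

Lemma restrS_del (n : nat) (g : network n) (l : link n) (T : {set 'I_n}) :
  ~~ (val l \subset T) -> restrS g T = restrS (g :\ l) T.
Proof.
move=> nl; apply/setP => m; rewrite !inE.
case: eqP => [->|_] //=; by rewrite (negbTE nl) andbF.
Qed.

Lemma myerson_fair (n : nat) (R : realType) (v : network n -> R) g (l : link n) i :
  i \in val l ->
  myerson v g i - myerson v (g :\ l) i =
  \sum_(T : {set 'I_n} | val l \subset T)
     coef n R #|T|.-1 * (v (restrS g T) - v (restrS (g :\ l) T)).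
Proof.
move=> il; rewrite !myersonE /Sh -sumrB.
transitivity (\sum_(S : {set 'I_n} | i \notin S) coef n R #|S| *
   (v (restrS g (i |: S)) - v (restrS (g :\ l) (i |: S)))).
  apply: eq_bigr => S iS.
  rewrite -(@restrS_del _ g l S); last by apply/negP => /subsetP/(_ i il); rewrite (negbTE iS).
  by rewrite -mulrBr; congr (_ * _); rewrite opprB addrA subrK.
rewrite (Sh_shift (fun T => v (restrS g T) - v (restrS (g :\ l) T))).
rewrite big_mkcond [RHS]big_mkcond /=; apply: eq_bigr => T _.
case lT: (val l \subset T); first by rewrite (subsetP lT i il).
case: (i \in T) => //.
by rewrite -(@restrS_del _ g l T) ?lT // subrr mulr0.
Qed.

Lemma rho0 (n : nat) (R : realType) (rho : network n -> R) g :
  is_prob rho -> ~~ (0 < rho g) -> rho g = 0.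
Proof.
move=> [H _] ng; have := H g; rewrite le_eqVlt => /orP[/eqP<-//|p].
by rewrite p in ng.
Qed.

Lemma extentS (n : nat) (R : realType) (rho : network n -> R) g :
  0 < rho g -> g \subset extent rho.
Proof. by move=> p; apply: (bigcup_sup g). Qed.

Lemma minus_linkE (n : nat) (R : realType) (l : link n) (rho : network n -> R) g :
  minus_link l rho g = if l \in g then 0 else rho g + rho (l |: g).
Proof.
rewrite /minus_link /restr_prob setCK subsetC sub1set inE.
case: (l \in g) => //=.
by rewrite (sum_sub1 l (fun h' => rho (g :|: h'))) setU0 setUC.
Qed.

Lemma sum_minus (n : nat) (R : realType) (l : link n) (rho : network n -> R) (G : network n -> R) :
  \sum_(g : network n) minus_link l rho g * G g =
  \sum_(g : network n | l \in g) rho g * G (g :\ l) + \sum_(g : network n | l \notin g) rho g * G g.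
Proof.
rewrite (bigID (fun g : network n => l \in g)) /= big1; last by move=> g lg; rewrite minus_linkE lg mul0r.
rewrite add0r.
transitivity (\sum_(g : network n | l \notin g) (rho g * G g + rho (l |: g) * G ((l |: g) :\ l))).
  apply: eq_bigr => g lg; rewrite minus_linkE (negbTE lg) mulrDl setU1K //.
rewrite big_split /= addrC; congr (_ + _).
exact: (reindexU1 l (fun g => rho g * G (g :\ l))).
Qed.

Lemma minus_prob (n : nat) (R : realType) (l : link n) (rho : network n -> R) :
  is_prob rho -> is_prob (minus_link l rho).
Proof.
move=> [H1 H2]; split.
  move=> g; rewrite minus_linkE; case: (l \in g) => //; exact: addr_ge0.
have := sum_minus l rho (fun _ => 1); under eq_bigr do rewrite mulr1.
move=> ->; under eq_bigr do rewrite mulr1. under [X in _ + X]eq_bigr do rewrite mulr1.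
by rewrite -H2 [RHS](bigID (fun g : network n => l \in g)).
Qed.

Lemma minus_extent (n : nat) (R : realType) (l : link n) (rho : network n -> R) :
  is_prob rho -> extent (minus_link l rho) \subset extent rho :\ l.
Proof.
move=> [H1 H2]; apply/subsetP => m /bigcupP[g]; rewrite minus_linkE.
case lg: (l \in g); first by rewrite ltxx.
move=> p mg; rewrite !inE; apply/andP; split.
  by apply/eqP => ml; rewrite -ml mg in lg.
have [pg|npg] := boolP (0 < rho g); first exact: (subsetP (extentS pg)).
have pl : 0 < rho (l |: g).
  by rewrite (rho0 (conj H1 H2) npg) add0r in p.
by apply: (subsetP (extentS pl)); rewrite inE mg orbT.
Qed.

Lemma expm_alloc (n : nat) (R : realType) : is_allocation_rule (@exp_myerson n R).
Proof.
move=> v rho G P i; rewrite inE => iN.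
apply: big1 => g _.
have [pg|npg] := boolP (0 < rho g); last by rewrite (rho0 P npg) mul0r.
rewrite myerson_null ?mulr0 //; apply/negP => ig; move/negP: iN; apply.
exact: NplayersS (extentS pg) ig.
Qed.

Lemma expm_CB (n : nat) (R : realType) (v rho : network n -> R) :
  inD v rho -> component_balanced_on (@exp_myerson n R) v rho.
Proof.
move=> [G CA P] h hE; rewrite /exp_myerson exchange_big /= [RHS]big_mkcond /=.
apply: eq_bigr => g _; rewrite -mulr_sumr.
have [pg|npg] := boolP (0 < rho g); last by rewrite (rho0 P npg) mul0r.
by rewrite (myerson_CB G CA (extentS pg) hE).
Qed.

Lemma expm_EBP (n : nat) (R : realType) (v rho : network n -> R) :
  equal_bargaining_on (@exp_myerson n R) v rho.
Proof.
move=> l _ i j il jl.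
have E : forall k, k \in val l -> exp_myerson v rho k - exp_myerson v (minus_link l rho) k =
   \sum_(g : network n | l \in g) rho g * (\sum_(T : {set 'I_n} | val l \subset T)
     coef n R #|T|.-1 * (v (restrS g T) - v (restrS (g :\ l) T))).
  move=> k kl; rewrite /exp_myerson sum_minus (bigID (fun g : network n => l \in g)) /=.
  rewrite opprD addrACA subrr addr0 -sumrB; apply: eq_bigr => g _.
  by rewrite -mulrBr myerson_fair.
by rewrite !E.
Qed.

Lemma uniq_step (n : nat) (R : realType) (Psi : alloc_type n R) (v rho : network n -> R) :
  is_allocation_rule Psi ->
  (forall v rho : network n -> R, inD v rho ->
        component_balanced_on Psi v rho /\ equal_bargaining_on Psi v rho) ->
  is_game v -> component_additive v -> is_prob rho ->
  (forall l, l \in extent rho -> forall j,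
      Psi v (minus_link l rho) j = exp_myerson v (minus_link l rho) j) ->
  forall i, Psi v rho i = exp_myerson v rho i.
Proof.
move=> Palloc Pprop G CA P IH i.
pose Phi x := Psi v rho x - exp_myerson v rho x.
have D : inD v rho by split.
have [CBP EBP] := Pprop v rho D.
have EQ : forall l, l \in extent rho -> forall x y, x \in val l -> y \in val l -> Phi x = Phi y.
  move=> l lE x y xl yl.
  have h1 := EBP l lE x y xl yl; have h2 := @expm_EBP n R v rho l lE x y xl yl.
  rewrite !IH // in h1.
  rewrite /Phi; lra.
apply/eqP; rewrite -subr_eq0; apply/eqP; rewrite -/(Phi i).
case iN: (i \in Nplayers (extent rho)); last first.
  have iN0 : i \in N0 (extent rho) by rewrite inE iN.
  by rewrite /Phi (Palloc v rho G P i iN0) (expm_alloc G P iN0) subrr.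
have [h hE ih] := comp_exists iN.
have conn : forall j, j \in Nplayers h -> Phi j = Phi i.
  move=> j jh.
  have clos : closed (adj h) [pred x | Phi x == Phi i].
    apply: intro_closed; first exact: sym_connect_sym (@adj_sym n h).
    move=> a b /existsP[m /andP[mh /andP[am bm]]]; rewrite !inE => /eqP <-.
    apply/eqP; apply: (EQ m) => //; exact: (subsetP (comp_subset hE)).
  have cij : connect (adj h) i j.
    move: hE; rewrite compE => /and4P[_ _ cn _].
    by have := implyP (forallP (forallP cn i) j); apply; rewrite ih jh.
  have := closed_connect clos cij; rewrite !inE eqxx => /esym/eqP.
  by [].
have S0 : \sum_(j in Nplayers h) Phi j = 0.
  by rewrite /Phi sumrB (CBP h hE) (expm_CB D hE) subrr.
rewrite (eq_bigr (fun _ => Phi i) conn) sumr_const in S0.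
move/eqP: S0; rewrite mulrn_eq0 => /orP[|/eqP//].
by rewrite cards_eq0 => /eqP h0; rewrite h0 inE in ih.
Qed.

Theorem mainTheorem1 (R : realType) (n : nat) :
  (is_allocation_rule (@exp_myerson n R) /\
   forall v rho : network n -> R, inD v rho ->
     component_balanced_on (@exp_myerson n R) v rho /\
     equal_bargaining_on (@exp_myerson n R) v rho) /\
  (forall Psi : alloc_type n R,
     is_allocation_rule Psi ->
     (forall v rho : network n -> R, inD v rho ->
        component_balanced_on Psi v rho /\ equal_bargaining_on Psi v rho) ->
     forall v rho : network n -> R, inD v rho ->
       forall i, Psi v rho i = exp_myerson v rho i).
Proof.
split.
  split; first exact: expm_alloc.
  by move=> v rho D; split; [exact: expm_CB | exact: expm_EBP].
move=> Psi Palloc Pprop v rho [G CA P].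
move: {2}#|extent rho| (leqnn #|extent rho|) => k.
elim: k rho P => [|k IH] rho P Hk i.
  apply: (uniq_step Palloc Pprop G CA P) => l lE.
  by move: Hk; rewrite leqn0 cards_eq0 => /eqP e; rewrite e inE in lE.
apply: (uniq_step Palloc Pprop G CA P) => l lE j.
apply: IH; first exact: minus_prob.
have h1 := subset_leq_card (minus_extent l P).
have h2 := cardsD1 l (extent rho); rewrite lE in h2.
rewrite add1n in h2; apply: (leq_trans h1); by rewrite -ltnS -h2.
Qed.
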